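(* Let $n\ge1$, $\mathcal{K}=\{\texttt{a},\texttt{b}\}$, $\epsilon\ge0$ and $p=e^\epsilon/(1+e^\epsilon)$. For the uniform prior $\pi$ on $\mathcal{K}^n$ and the single-target gain function $g_{\rm T}$, $$V_{\rm T}[\pi\triangleright\mathbf{N}\mathbf{S}]=\frac{1}{2^n}\sum_{i=0}^{n}\binom{n}{i}\frac{\max(i,n-i)\,p+\min(i,n-i)(1-p)}{n}.$$
   Context: A dataset is $x=(x_0,\dots,x_{n-1})\in\mathcal{K}^n$; its histogram $h(x)$ is the map $\kappa\mapsto|\{i:x_i=\kappa\}|$; $\#z$ is the number of datasets with histogram $z$. Full $k$-RR channel (with $k=2$) $\mathbf{N}:\mathcal{K}^n\to\mathcal{K}^n$: $\mathbf{N}_{x,y}=\prod_{i}q(y_i\mid x_i)$, $q(b\mid a)=p$ if $b=a$, $1-p$ otherwise. Shuffle channel $\mathbf{S}:\mathcal{K}^n\to\mathcal{K}^n$: $\mathbf{S}_{x,y}=1/\#h(x)$ if $h(y)=h(x)$, else $0$. $\mathbf{N}\mathbf{S}$ is the matrix product. Uniform prior $\pi_x=1/2^n$. Single-target gain function: $\mathcal{W}=\mathcal{K}$, $g_{\rm T}(w,x)=1$ if $x_0=w$, else $0$. Posterior vulnerability: $V_{\rm T}[\pi\triangleright\mathbf{C}]=\sum_{y}\max_{w}\sum_{x}\pi_x\mathbf{C}_{x,y}g_{\rm T}(w,x)$. *)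

(* Defs.v *)
From HB Require Import structures.
From mathcomp Require Import all_boot all_order all_algebra.
From mathcomp Require Import all_classical all_reals.
From mathcomp Require Import sequences exp.
Set Implicit Arguments. Unset Strict Implicit. Unset Printing Implicit Defensive.
Import Order.TTheory GRing.Theory Num.Theory.
Local Open Scope ring_scope.

(* The alphabet K = {a, b} is encoded as bool (a := false, b := true).
   A dataset of size n is an n-tuple over K. *)
Notation dataset n := (n.-tuple bool).

Definition hist n (x : dataset n) : {ffun bool -> nat} :=
  [ffun k => count_mem k x].

Definition nhist n (z : {ffun bool -> nat}) : nat :=
  #|[set y : dataset n | hist y == z]|.

Definition krr (R : ringType) (p : R) (a b : bool) : R :=
  if b == a then p else 1 - p.

Definition Nch (R : ringType) (p : R) n (x y : dataset n) : R :=
  \prod_(i < n) krr p (tnth x i) (tnth y i).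

Definition Sch (R : fieldType) n (x y : dataset n) : R :=
  if hist y == hist x then (nhist n (hist x))%:R^-1 else 0.

Definition mulch (R : ringType) n (A B : dataset n -> dataset n -> R)
  (x y : dataset n) : R := \sum_(z : dataset n) A x z * B z y.

Definition uprior (R : fieldType) n (x : dataset n) : R := (2 ^ n)%:R^-1.

Definition gT (R : ringType) n (w : bool) (x : dataset n) : R :=
  if nth false x 0 == w then 1 else 0.

Definition VT (R : realFieldType) n (pi : dataset n -> R)
  (C : dataset n -> dataset n -> R) : R :=
  \sum_(y : dataset n) \big[Num.max/0]_(w : bool)
     \sum_(x : dataset n) pi x * C x y * gT R w x.

(* Main.v *)
Require Import Defs.
From HB Require Import structures.
From mathcomp Require Import all_boot all_order all_algebra.
From mathcomp Require Import all_classical all_reals.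
From mathcomp Require Import sequences exp.
From mathcomp Require Import ring lra.
Import Order.TTheory GRing.Theory Num.Theory.
Local Open Scope ring_scope.

Lemma sum_cons (R : ringType) m (F : m.+1.-tuple bool -> R) :
  \sum_x F x = \sum_(b : bool) \sum_(t : m.-tuple bool) F [tuple of b :: t].
Proof.
rewrite pair_big /=.
rewrite (reindex (fun q : bool * m.-tuple bool => [tuple of q.1 :: q.2])) //=.
exists (fun x => (thead x, [tuple of behead x])) => [[b t] _ | x _].
- by congr pair; apply: val_inj.
- by rewrite /= -tuple_eta.
Qed.

Lemma Nch_cons (R : ringType) (p : R) m (b c : bool) (t s : m.-tuple bool) :
  Nch p [tuple of b :: t] [tuple of c :: s] = krr p b c * @Nch R p m t s.
Proof.
rewrite /Nch big_ord_recl; congr (_ * _).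
by apply: eq_bigr => i _; rewrite !(tnth_nth false).
Qed.

Lemma sumN (R : ringType) (p : R) m (s : m.-tuple bool) :
  \sum_(t : m.-tuple bool) Nch p t s = 1.
Proof.
elim: m s => [|m IH] s.
  rewrite (eq_bigr (fun _ => 1)); last by move=> t _; rewrite /Nch big_ord0.
  by rewrite sumr_const card_tuple.
rewrite (tuple_eta s) sum_cons.
rewrite (eq_bigr (fun b => krr p b (thead s))); last first.
  move=> b _; rewrite (eq_bigr (fun t => krr p b (thead s) * Nch p t [tuple of behead s])).
    by rewrite -mulr_sumr IH mulr1.
  by move=> t _; rewrite Nch_cons.
rewrite big_bool /krr; case: (thead s) => /=.
  by rewrite addrC subrK.
by rewrite subrK.
Qed.

Lemma step2 (R : ringType) (p : R) m (z : m.+1.-tuple bool) w :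
  \sum_x Nch p x z * gT R w x = krr p w (thead z).
Proof.
rewrite (tuple_eta z) sum_cons.
rewrite (eq_bigr (fun b => (b == w)%:R * krr p b (thead z))); last first.
  move=> b _; rewrite (eq_bigr (fun t => (b == w)%:R * krr p b (thead z) * Nch p t [tuple of behead z])).
    by rewrite -mulr_sumr sumN mulr1.
  move=> t _; rewrite Nch_cons /gT /=; case: (b == w); rewrite ?mulr1 ?mulr0 ?mul1r ?mul0r //.
rewrite theadE big_bool; case: w => /=; rewrite ?mul1r ?mul0r ?addr0 ?add0r //.
Qed.

Lemma cnt (R : ringType) m k :
  \sum_(z : m.-tuple bool) ((count_mem true z == k)%:R : R) = 'C(m, k)%:R.
Proof.
elim: m k => [|m IH] k.
  rewrite (eq_bigr (fun _ => ((0 == k)%:R : R))); last first.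
    by move=> z _; rewrite (size0nil (size_tuple z)).
  by rewrite sumr_const card_tuple bin0n expn0 mulr1n eq_sym.
rewrite sum_cons big_bool /=.
rewrite [X in _ + X](eq_bigr (fun t : m.-tuple bool => (count_mem true t == k)%:R : R)) // IH.
rewrite (eq_bigr (fun t : m.-tuple bool => ((count_mem true t).+1 == k)%:R : R)) //.
case: k => [|k].
  by rewrite big1 ?add0r // !bin0.
rewrite (eq_bigr (fun t : m.-tuple bool => (count_mem true t == k)%:R : R)) // IH.
by rewrite binS natrD addrC.
Qed.

Lemma cntF m (z : m.-tuple bool) : count_mem false z = (m - count_mem true z)%N.
Proof.
have h := count_predC (pred1 true) z; rewrite size_tuple in h.
have hs := count_size (pred1 true) z; rewrite size_tuple in hs.
apply/(@addnI (count_mem true z)); rewrite subnKC // -[RHS]h.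
by congr addn; apply: eq_count => -[].
Qed.

Lemma histE m (z y : m.-tuple bool) :
  (hist z == hist y) = (count_mem true z == count_mem true y).
Proof.
apply/eqP/eqP => [/ffunP/(_ true)|h]; first by rewrite !ffunE.
by apply/ffunP => -[]; rewrite !ffunE // !cntF h.
Qed.

Lemma nhistE (R : ringType) m (y : m.-tuple bool) :
  (nhist m (hist y))%:R = ('C(m, count_mem true y))%:R :> R.
Proof.
rewrite -(cnt R) /nhist -sum1_card natr_sum big_mkcond /=.
by apply: eq_bigr => z _; rewrite inE histE; case: ifP.
Qed.

Lemma bigbool (T : Type) (op : T -> T -> T) x (F : bool -> T) :
  \big[op/x]_(w : bool) F w = op (F true) (op (F false) x).
Proof. by rewrite unlock /index_enum /= unlock /=. Qed.

Lemma inner (R : realFieldType) (p : R) m (y : m.+1.-tuple bool) (w : bool) :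
  let k := count_mem true y in
  \sum_x @uprior R m.+1 x * mulch (@Nch R p m.+1) (@Sch R m.+1) x y * gT R w x =
  (2 ^ m.+1)%:R^-1 * ('C(m.+1, k)%:R^-1 *
     (krr p w true * \sum_(t : m.-tuple bool) ((count_mem true t).+1 == k)%:R
      + krr p w false * 'C(m, k)%:R)).
Proof.
move=> k.
under eq_bigr => x _ do rewrite /uprior /mulch mulr_sumr mulr_suml.
rewrite exchange_big /=.
rewrite (eq_bigr (fun z => (2 ^ m.+1)%:R^-1 * @Sch R m.+1 z y * krr p w (thead z))); last first.
  move=> z _; rewrite -step2 mulr_sumr; apply: eq_bigr => x _.
  ring.
under eq_bigr do rewrite -mulrA.
rewrite -mulr_sumr; congr (_ * _).
rewrite (eq_bigr (fun z : m.+1.-tuple bool => 'C(m.+1, k)%:R^-1 * ((count_mem true z == k)%:R * krr p w (thead z)))); last first.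
  move=> z _; rewrite /Sch eq_sym histE; case: eqP => h; last by rewrite !mul0r mulr0.
  by rewrite nhistE h mul1r.
rewrite -mulr_sumr sum_cons big_bool /=; congr (_ * _).
congr (_ + _).
  rewrite mulr_sumr; apply: eq_bigr => t _; rewrite theadE mulrC //.
rewrite -(cnt R) mulr_sumr; apply: eq_bigr => t _; rewrite theadE mulrC //.
Qed.

Lemma closedf (R : realFieldType) (p : R) m k (w : bool) : (k <= m.+1)%N ->
  'C(m.+1, k)%:R^-1 *
     (krr p w true * \sum_(t : m.-tuple bool) ((count_mem true t).+1 == k)%:R
      + krr p w false * 'C(m, k)%:R)
  = (k%:R * krr p w true + (m.+1 - k)%:R * krr p w false) / m.+1%:R.
Proof.
move=> hk.
have hC : ('C(m.+1, k)%:R : R) != 0 by rewrite pnatr_eq0 -lt0n bin_gt0.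
have hn : (m.+1%:R : R) != 0 by rewrite pnatr_eq0.
have h1 : (m.+1%:R : R) * \sum_(t : m.-tuple bool) ((count_mem true t).+1 == k)%:R
          = k%:R * 'C(m.+1, k)%:R.
  clear hC; case: k hk => [|k] hk.
    by rewrite big1 ?mulr0 ?mul0r.
  under eq_bigr do rewrite eqSS.
  by rewrite cnt -!natrM mul_bin_diag.
have h2 : (m.+1%:R : R) * 'C(m, k)%:R = (m.+1 - k)%:R * 'C(m.+1, k)%:R.
  by rewrite -!natrM (mul_bin_down m.+1 k).
rewrite (_ : \sum_(t : m.-tuple bool) _ = k%:R * 'C(m.+1, k)%:R / m.+1%:R);
  last by rewrite -h1 mulrC mulKf.
rewrite (_ : ('C(m, k)%:R : R) = (m.+1 - k)%:R * 'C(m.+1, k)%:R / m.+1%:R);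
  last by rewrite -h2 mulrC mulKf.
field.
rewrite hC andbT; apply/negP => /eqP h; have := ler0n R m; lra.
Qed.

Lemma maxf (R : realFieldType) (p c : R) (n k : nat) : (k <= n)%N -> (0 < n)%N ->
  0 <= 1 - p -> 1 - p <= p -> 0 < c ->
  Num.max (c * ((k%:R * krr p true true + (n - k)%:R * krr p true false) / n%:R))
    (Num.max (c * ((k%:R * krr p false true + (n - k)%:R * krr p false false) / n%:R)) 0)
  = c * (((maxn k (n - k))%:R * p + (minn k (n - k))%:R * (1 - p)) / n%:R).
Proof.
move=> hk hn hq hpq hc.
have ha : (0 : R) <= k%:R by exact: ler0n.
have hb : (0 : R) <= (n - k)%:R by exact: ler0n.
have hni : (0 : R) < n%:R^-1 by rewrite invr_gt0 ltr0n.
have hp : 0 <= p by lra.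
case: (leqP k (n - k)) => h.
  have hab : (k%:R : R) <= (n - k)%:R by rewrite ler_nat.
    rewrite /krr /=.
  have hB : 0 <= c * ((k%:R * (1 - p) + (n - k)%:R * p) / n%:R).
    apply: mulr_ge0; first lra.
    apply: mulr_ge0; [nra | lra].
  rewrite (max_l hB) max_r; first by rewrite addrC.
  rewrite ler_pM2l // ler_pM2r //; nra.
have hab : ((n - k)%:R : R) <= k%:R by rewrite ler_nat ltnW.
rewrite /krr /=.
have hB : 0 <= c * ((k%:R * (1 - p) + (n - k)%:R * p) / n%:R).
  apply: mulr_ge0; first lra.
  apply: mulr_ge0; [nra | lra].
rewrite (max_l hB) max_l //.
rewrite ler_pM2l // ler_pM2r //; nra.
Qed.

Theorem mainTheorem11 (R : realType) (n : nat) (eps : R) :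
  (0 < n)%N -> 0 <= eps ->
  let p := expR eps / (1 + expR eps) in
  VT (@uprior R n) (mulch (@Nch R p n) (@Sch R n)) =
  (2 ^ n)%:R^-1 * \sum_(i < n.+1)
     'C(n, i)%:R * (((maxn i (n - i))%:R * p + (minn i (n - i))%:R * (1 - p))
                    / n%:R).
Proof.
move=> n0 eps0 p.
case: n n0 => [//|m] _.
have he : 1 <= expR eps by have := expR_ge1Dx eps; lra.
have hq : 1 - p = (1 + expR eps)^-1.
  rewrite /p; field; apply/negP => /eqP h; lra.
have hqi : 0 < (1 + expR eps)^-1 by rewrite invr_gt0; lra.
have hp : p = expR eps * (1 + expR eps)^-1 by [].
have hq0 : 0 <= 1 - p by lra.
have hpq : 1 - p <= p by rewrite hq hp; nra.
have hc : (0 : R) < (2 ^ m.+1)%:R^-1 by rewrite invr_gt0 ltr0n expn_gt0.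
rewrite /VT.
rewrite (eq_bigr (fun y : m.+1.-tuple bool => (2 ^ m.+1)%:R^-1 *
   (((maxn (count_mem true y) (m.+1 - count_mem true y))%:R * p
     + (minn (count_mem true y) (m.+1 - count_mem true y))%:R * (1 - p)) / m.+1%:R))); last first.
  move=> y _.
  have hk : (count_mem true y <= m.+1)%N.
    by have := count_size (pred1 true) y; rewrite size_tuple.
  by rewrite bigbool !inner !closedf // maxf.
rewrite -mulr_sumr; congr (_ * _).
rewrite (eq_bigr (fun i : 'I_m.+2 => \sum_(y : m.+1.-tuple bool)
   ((count_mem true y == i)%:R * (((maxn i (m.+1 - i))%:R * p + (minn i (m.+1 - i))%:R * (1 - p))
                    / m.+1%:R)))); last by move=> i _; rewrite -(cnt R) mulr_suml.
rewrite exchange_big /=; apply: eq_bigr => y _.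
have hk : (count_mem true y < m.+2)%N.
  by have := count_size (pred1 true) y; rewrite size_tuple.
rewrite (bigD1 (Ordinal hk)) //= eqxx mul1r big1 ?addr0 // => i hi.
rewrite (_ : (count_mem true y == i) = false) ?mul0r //.
apply/negbTE; apply: contra hi => /eqP e; apply/eqP; apply: val_inj; by rewrite /= e.
Qed.
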